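(* Let $T$ be a simple tree of maximum degree 3 and let $Q=Q(T,4)$ be the graph defined below. Then $Q$ covers $T^{(3)}$, and every covering projection from $Q$ to $T^{(3)}$ is 4-fold (every vertex of $T^{(3)}$ has exactly 4 preimages). Moreover, in every covering projection $f:Q\to T^{(3)}$, the image $f(u_i)$ of every relevant vertex $u_i$ of $Q$ is a semi-simple vertex of $T^{(3)}$.
   Context: A graph may contain edges, loops and semi-edges (a semi-edge is a link with exactly one end-vertex, contributing 1 to that vertex's degree). A covering projection from $G$ to $H$ is a map $f$ sending vertices to vertices and links to links such that: for every edge $e$ of $H$ with end-vertices $u,v$, $f^{-1}(e)$ is a perfect matching between $f^{-1}(u)$ and $f^{-1}(v)$; for every loop $l$ of $H$ at $u$, $f^{-1}(l)$ is a disjoint union of cycles spanning $f^{-1}(u)$; for every semi-edge $s$ of $H$ at $u$, $f^{-1}(s)$ is a disjoint union of edges and semi-edges spanning $f^{-1}(u)$. $T^{(3)}$ is the 3-regular graph obtained from $T$ by attaching $3-\deg_T(u)$ semi-edges to each vertex $u$. A vertex is semi-simple if it is incident with no loops, no multiple edges and at most one semi-edge. The graph $Q(T,4)$: take four disjoint copies of $T$, denoting by $u_i$ the copy of $u\in V_T$ in the $i$-th copy ($i\in[4]$); for every $u$ with $\deg_T u=1$ add the edges $u_1u_2,u_2u_3,u_3u_4,u_4u_1$; for every $u$ with $\deg_T u=2$ add the edges $u_1u_3$ and $u_2u_4$. A vertex $u\in V_T$ is relevant if $\deg_T u=3$, or if $\deg_T u=2$ and $u$ has a neighbor $v$ in $T$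 with $\deg_T v\ge 2$; a vertex $u_i$ of $Q$ is relevant if $u$ is relevant in $T$. *)

(* Defs.v *)
From mathcomp Require Import all_boot.
Set Implicit Arguments. Unset Strict Implicit. Unset Printing Implicit Defensive.

(* A link l with [gends l = (u, None)] is a semi-edge at u;
   [gends l = (u, Some u)] is a loop at u;
   [gends l = (u, Some v)] with u <> v is an (ordinary) edge uv.      *)
Record graph := Graph {
  gV : finType;
  gL : finType;
  gends : gL -> gV * option gV }.

Definition end_deg (G : graph) (x : gV G) (g : gL G) : nat :=
  match gends g with
  | (u, None) => (u == x)
  | (u, Some v) => (u == x) + (v == x)
  end.

Definition deg_in (G : graph) (S : pred (gL G)) (x : gV G) : nat :=
  \sum_(g | S g) end_deg x g.

(* Covering projection (fv on vertices, fl on links), following the paper: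
   - edge e=uv of H : f^-1(e) is a perfect matching between f^-1(u), f^-1(v)
     (all its links are edges joining f^-1(u) to f^-1(v), and every vertex of
      f^-1(u) u f^-1(v) is incident with exactly one of them);
   - loop l at u : f^-1(l) is a disjoint union of cycles spanning f^-1(u)
     (its links are edges/loops inside f^-1(u), and the spanned subgraph is
      2-regular, i.e. a disjoint union of cycles, loops and digons included);
   - semi-edge s at u : f^-1(s) is a disjoint union of edges and semi-edges
     spanning f^-1(u) (its links are edges/semi-edges inside f^-1(u), each
     vertex of f^-1(u) incident with exactly one of them). *)
Definition covering (G H : graph) (fv : gV G -> gV H) (fl : gL G -> gL H)
  : Prop :=
  forall h : gL H,
  match gends h with
  | (u, None) =>
      (forall g, fl g = h ->
         match gends g with
         | (a, None) => fv a = u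
         | (a, Some b) => a <> b /\ fv a = u /\ fv b = u
         end) /\
      (forall x, fv x = u -> deg_in (fun g => fl g == h) x = 1)
  | (u, Some v) =>
      if u == v then
        (forall g, fl g = h ->
           exists a b, gends g = (a, Some b) /\ fv a = u /\ fv b = u) /\
        (forall x, fv x = u -> deg_in (fun g => fl g == h) x = 2)
      else
        (forall g, fl g = h ->
           exists a b, gends g = (a, Some b) /\
             ((fv a = u /\ fv b = v) \/ (fv a = v /\ fv b = u))) /\
        (forall x, fv x = u \/ fv x = v -> deg_in (fun g => fl g == h) x = 1)
  end.

Definition covers (G H : graph) : Prop :=
  exists (fv : gV G -> gV H) (fl : gL G -> gL H), covering fv fl.

(* semi-simple vertex: no loops, no multiple edges, at most one semi-edge *)
Definition semi_simple (H : graph) (v : gV H) : Prop :=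
  (forall g, gends g <> (v, Some v)) /\
  (forall g1 g2 a1 b1 a2 b2, g1 <> g2 ->
     gends g1 = (a1, Some b1) -> gends g2 = (a2, Some b2) ->
     a1 <> b1 -> (v = a1 \/ v = b1) ->
     ~ ((a1 = a2 /\ b1 = b2) \/ (a1 = b2 /\ b1 = a2))) /\
  (#|[pred g | gends g == (v, None)]| <= 1).

Section Tree.
Variables (VT : finType) (adj : rel VT).

Definition tdeg (u : VT) : nat := #|[pred v | adj u v]|.

Definition connected_graph : Prop := forall x y, connect adj x y.

(* no cycle (of length >= 3, the graph being simple) *)
Definition acyclic_graph : Prop :=
  ~ exists s : seq VT, [/\ 3 <= size s, uniq s & cycle adj s].

Definition is_tree : Prop := connected_graph /\ acyclic_graph.

Definition max_degree3 : Prop :=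
  (forall u, tdeg u <= 3) /\ (exists u, tdeg u = 3).

(* edges of T, each listed once (oriented by enum_rank) *)
Definition Tedge := {p : VT * VT | adj p.1 p.2 && (enum_rank p.1 < enum_rank p.2)}.
(* 3 - deg u semi-edges at u *)
Definition Tsemi := {p : VT * 'I_3 | tdeg p.1 <= p.2}.

Definition T3_ends (l : Tedge + Tsemi) : VT * option VT :=
  match l with
  | inl e => ((val e).1, Some (val e).2)
  | inr s => ((val s).1, None)
  end.

Definition T3 : graph := @Graph VT (Tedge + Tsemi)%type T3_ends.

(* Q(T,4): vertex (u, i) is u_{i+1} *)
Definition Qring := {p : VT * 'I_4 | tdeg p.1 == 1}.   (* u_i u_{i+1 mod 4} *)
Definition Qcross := {p : VT * 'I_2 | tdeg p.1 == 2}.  (* u_1u_3 and u_2u_4 *)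

Definition QV := (VT * 'I_4)%type.

Definition Q_ends (l : (Tedge * 'I_4) + (Qring + Qcross)) : QV * option QV :=
  match l with
  | inl (e, i) => (((val e).1, i), Some ((val e).2, i))
  | inr (inl r) => (((val r).1, (val r).2),
                    Some ((val r).1, (inord (((val r).2).+1 %% 4) : 'I_4)))
  | inr (inr c) => (((val c).1, (inord (val c).2 : 'I_4)),
                    Some ((val c).1, (inord ((val c).2 + 2) : 'I_4)))
  end.

Definition Q4 : graph :=
  @Graph (QV)%type ((Tedge * 'I_4) + (Qring + Qcross))%type Q_ends.

Definition relevant (u : VT) : bool :=
  (tdeg u == 3) || ((tdeg u == 2) && [exists v, adj u v && (2 <= tdeg v)]).

End Tree.

(* Main.v *)
Require Import Defs.
From mathcomp Require Import all_boot.
Set Implicit Arguments. Unset Strict Implicit. Unset Printing Implicit Defensive.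

Definition s4 (j : 'I_4) : 'I_4 := inord (j.+1 %% 4).

Lemma s4_neq j : (s4 j == j) = false.
Proof. by case: j => [[|[|[|[|?]]]] H] //; rewrite -val_eqE /= inordK. Qed.
Lemma s4_odd j : odd (s4 j) = ~~ odd j.
Proof. by case: j => [[|[|[|[|?]]]] H] //; rewrite /s4 /= inordK. Qed.
Lemma s4s4_neq j : (s4 (s4 j) == j) = false.
Proof. by case: j => [[|[|[|[|?]]]] H] //; rewrite -val_eqE /= !inordK. Qed.
Lemma s4_4 j : s4 (s4 (s4 (s4 j))) = j.
Proof. case: j => [[|[|[|[|?]]]] H] //; apply/val_inj; rewrite /s4 /= ?inordK //. Qed.
Lemma s4_inj j k : s4 j = s4 k -> j = k.
Proof. by move/(congr1 (fun x => s4 (s4 (s4 x)))); rewrite !s4_4. Qed.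
Lemma s4s4s4_neq j : (s4 (s4 (s4 j)) == j) = false.
Proof. by case: j => [[|[|[|[|?]]]] H] //; rewrite -val_eqE /= !inordK. Qed.
Lemma s4_3_odd j : odd (s4 (s4 (s4 j))) = ~~ odd j.
Proof. by rewrite !s4_odd negbK. Qed.

Definition c4 (c : 'I_2) : 'I_4 := inord c.
Definition c4' (c : 'I_2) : 'I_4 := inord (c + 2).
Lemma c4_neq c d : (c4 c == c4' d) = false.
Proof. by case: c d => [[|[|?]] H] [[|[|?]] H'] //; rewrite -val_eqE /c4 /c4' /= !inordK. Qed.
Lemma c4_odd c : odd (c4 c) = odd (c4' c).
Proof. by case: c => [[|[|?]] H] //; rewrite /c4 /c4' /= !inordK. Qed.
Lemma c4_inj c d : c4 c = c4 d -> c = d.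
Proof.
move/(congr1 val) => E; apply/val_inj; move: E; rewrite /c4 /= !inordK //.
  exact: (@leq_trans 2).
exact: (@leq_trans 2).
Qed.
Lemma c4'_inj c d : c4' c = c4' d -> c = d.
Proof.
move/(congr1 val) => E; apply/val_inj; move: E; rewrite /c4' /= !inordK //.
  by move/eqP; rewrite eqn_add2r => /eqP.
  by case: d => [[|[|?]] ?].
by case: c => [[|[|?]] ?].
Qed.

Definition pick0 (k : 'I_4) (b : bool) : 'I_4 := if odd k == b then k else s4 (s4 (s4 k)).
Lemma pick0_odd k b : odd (pick0 k b) = b.
Proof. by case: k => [[|[|[|[|?]]]] H] //; case: b; rewrite /pick0 /s4 /= ?inordK. Qed.
Lemma pick0_in k b : (pick0 k b == k) || (s4 (pick0 k b) == k).
Proof. by case: k => [[|[|[|[|?]]]] H] //; case: b; rewrite /pick0 /s4 /= -?val_eqE /= ?inordK. Qed.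
Lemma pick0_uniq (k : 'I_4) b (j : 'I_4) : odd j = b -> (j == k) || (s4 j == k) -> j = pick0 k b.
Proof.
by case: k => [[|[|[|[|?]]]] H] //; case: j => [[|[|[|[|?]]]] H'] //; move=> <-;
  rewrite /pick0 /s4 /= -?val_eqE /= ?inordK //; move=> _; apply/val_inj; rewrite /= ?inordK.
Qed.
Definition cpick (k : 'I_4) : 'I_2 := inord (k %% 2).
Lemma cpick_in k : (c4 (cpick k) == k) || (c4' (cpick k) == k).
Proof. by case: k => [[|[|[|[|?]]]] H] //; rewrite /cpick /c4 /c4' -?val_eqE /= !inordK. Qed.
Lemma cpick_uniq (k : 'I_4) (c : 'I_2) : (c4 c == k) || (c4' c == k) -> c = cpick k.
Proof.
case: k => [[|[|[|[|?]]]] H] //; case: c => [[|[|?]] H'] //;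
  rewrite /cpick /c4 /c4' -?val_eqE /= ?inordK //; move=> _; apply/val_inj; rewrite /= ?inordK //.
Qed.
Definition semi_idx (b : bool) : 'I_3 := if b then inord 2 else inord 1.
Lemma semi_idx_inj b b' : semi_idx b = semi_idx b' -> b = b'.
Proof. by case: b; case: b' => // /(congr1 val); rewrite /= !inordK. Qed.
Lemma semi_idxE (i : 'I_3) : 1 <= i -> semi_idx (nat_of_ord i == 2) = i.
Proof. by case: i => [[|[|[|?]]] H] // _; apply/val_inj; rewrite /semi_idx /= inordK. Qed.

Section L18.
Variables (VT : finType) (adj : rel VT).
Hypotheses (adj_sym : symmetric adj) (adj_irr : irreflexive adj).
Hypothesis T_tree : is_tree adj.
Hypothesis T_maxdeg : max_degree3 adj.

Lemma adj_neq a b : adj a b -> a <> b.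
Proof. by move=> H E; subst; rewrite adj_irr in H. Qed.

Lemma tedge_adj (e : Tedge adj) : adj (val e).1 (val e).2.
Proof. by case/andP: (valP e). Qed.

Lemma tedge_lt (e : Tedge adj) : enum_rank (val e).1 < enum_rank (val e).2.
Proof. by case/andP: (valP e). Qed.

Lemma tedge_uniq (e1 e2 : Tedge adj) :
  ((val e1).1 = (val e2).1 /\ (val e1).2 = (val e2).2) \/
  ((val e1).1 = (val e2).2 /\ (val e1).2 = (val e2).1) -> e1 = e2.
Proof.
move=> [[E1 E2]|[E1 E2]].
  by apply: val_inj; case: (val e1) (val e2) E1 E2 => [? ?] [? ?] /= -> ->.
have := tedge_lt e1; have := tedge_lt e2; rewrite E1 E2 => H1 H2.
by have := ltn_trans H1 H2; rewrite ltnn.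
Qed.

Lemma tedge_exists u v : adj u v -> exists e : Tedge adj,
  ((val e).1 = u /\ (val e).2 = v) \/ ((val e).1 = v /\ (val e).2 = u).
Proof.
move=> H.
have Hne : enum_rank u != enum_rank v.
  by apply/eqP => /enum_rank_inj E; apply: (adj_neq H).
case: (ltngtP (enum_rank u) (enum_rank v)) => [lt|gt|eq].
- have P : adj (u, v).1 (u, v).2 && (enum_rank (u, v).1 < enum_rank (u, v).2) by rewrite /= H lt.
  by exists (exist _ (u, v) P); left.
- have P : adj (v, u).1 (v, u).2 && (enum_rank (v, u).1 < enum_rank (v, u).2).
    by rewrite /= adj_sym H gt.
  by exists (exist _ (v, u) P); right.
- by move: Hne; rewrite (val_inj eq) eqxx.
Qed.

Lemma adj_neqb a b : adj a b -> (a == b) = false.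
Proof. by move=> H; apply/eqP; apply: adj_neq H. Qed.

Lemma no_tri a b c : adj a b -> adj b c -> adj c a -> False.
Proof.
move=> Hab Hbc Hca; case: T_tree => _; apply; exists [:: a; b; c].
split => //=; last by rewrite Hab Hbc Hca.
rewrite !inE (adj_neqb Hab) (adj_neqb Hbc) eq_sym (adj_neqb Hca) //.
Qed.

Lemma no_sq a b c d : adj a b -> adj b c -> adj c d -> adj d a ->
  a <> c -> b <> d -> False.
Proof.
move=> Hab Hbc Hcd Hda Hac Hbd; case: T_tree => _; apply; exists [:: a; b; c; d].
split => //=; last by rewrite Hab Hbc Hcd Hda.
have nac : (a == c) = false by apply/eqP.
have nbd : (b == d) = false by apply/eqP.
rewrite !inE (adj_neqb Hab) (adj_neqb Hbc) (adj_neqb Hcd) nac nbd /=; rewrite eq_sym (adj_neqb Hda). done.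
Qed.

Lemma connect_ind (P : VT -> Prop) w :
  (forall z z', P z -> adj z z' -> P z') -> P w -> forall z, P z.
Proof.
move=> step Pw z; case: T_tree => conn _.
case/connectP: (conn w z) => p; elim: p w Pw => [|a p IH] w Pw /=.
  by move=> _ ->.
case/andP => Hwa Hp Hz; apply: (IH a) => //; exact: step Hwa.
Qed.

Lemma tdeg_pos u : 0 < tdeg adj u.
Proof.
case: T_maxdeg => _ [c Hc].
have [v Huv] : exists v, v != u.
  case: (eqVneq c u) => [E|]; last by exists c.
  have : 0 < tdeg adj c by rewrite Hc.
  rewrite /tdeg; case/card_gt0P => v; rewrite inE => Hv; exists v.
  by rewrite -E; apply/eqP => E'; rewrite E' adj_irr in Hv.
case: T_tree => conn _.
case/connectP: (conn u v) => [[|a p]] /=.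
  by move=> _ E; rewrite E eqxx in Huv.
case/andP => Hua _ _; rewrite /tdeg; apply/card_gt0P; exists a; rewrite inE; exact Hua.
Qed.


Notation QG := (Q4 adj).
Definition ends_xy (g : gL QG) (x y : gV QG) :=
  gends g = (x, Some y) \/ gends g = (y, Some x).

Lemma Qring_deg (r : Qring adj) : tdeg adj (val r).1 = 1.
Proof. by apply/eqP; apply: (valP r). Qed.
Lemma Qcross_deg (r : Qcross adj) : tdeg adj (val r).1 = 2.
Proof. by apply/eqP; apply: (valP r). Qed.

Lemma Q_some (g : gL QG) : exists a b, gends g = (a, Some b) /\ a <> b.
Proof.
case: g => [[e i]|[r|c]] /=.
- exists ((val e).1, i), ((val e).2, i); split => // -[] E.
  exact: adj_neq (tedge_adj e) E.
- exists ((val r).1, (val r).2), ((val r).1, s4 (val r).2); split => // -[] E.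
  by move/eqP: E; rewrite eq_sym s4_neq.
- exists ((val c).1, c4 (val c).2), ((val c).1, c4' (val c).2); split => // -[] E.
  by move/eqP: E; rewrite c4_neq.
Qed.

Lemma Q_parity (g : gL QG) a b : ends_xy g a b -> odd a.2 != odd b.2 ->
  tdeg adj a.1 = 1 /\ a.1 = b.1.
Proof.
case: g => [[e i]|[r|c]] /= [] [] <- <-; rewrite /= ?eqxx //.
- by rewrite Qring_deg.
- by rewrite Qring_deg.
- by rewrite -/(c4 _) -/(c4' _) c4_odd eqxx.
- by rewrite -/(c4 _) -/(c4' _) c4_odd eqxx.
Qed.

Lemma Q_tree (g : gL QG) a b : ends_xy g a b -> a.1 <> b.1 -> a.2 = b.2.
Proof. by case: g => [[e i]|[r|c]] /= [] [] <- <-. Qed.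

Lemma Q_ends_inj (g1 g2 : gL QG) : gends g1 = gends g2 -> g1 = g2.
Proof.
case: g1 => [[e1 i1]|[r1|c1]]; case: g2 => [[e2 i2]|[r2|c2]] /=.
- case=> E1 <- E2; have -> // : e1 = e2 by apply: tedge_uniq; left.
- case=> E1 _ E2 _; exfalso; apply: (adj_neq (tedge_adj e1)); by rewrite E1 E2.
- case=> E1 _ E2 _; exfalso; apply: (adj_neq (tedge_adj e1)); by rewrite E1 E2.
- case=> E1 _ E2 _; exfalso; apply: (adj_neq (tedge_adj e2)); by rewrite -E1 -E2.
- case=> E1 E2 _; have -> // : r1 = r2; apply: val_inj; move: E1 E2.
  by case: r1 r2 => [[? ?] ?] [[? ?] ?] /= -> ->.
- case=> E1 _ _; exfalso; move: (Qring_deg r1); by rewrite E1 Qcross_deg.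
- case=> E1 _ E2 _; exfalso; apply: (adj_neq (tedge_adj e2)); by rewrite -E1 -E2.
- case=> E1 _ _; exfalso; move: (Qring_deg r2); by rewrite -E1 Qcross_deg.
- case=> E1 E2 _; have -> // : c1 = c2; apply: val_inj; move: E1 (c4_inj E2).
  clear E2; by case: c1 c2 => [[? ?] ?] [[? ?] ?] /= -> ->.
Qed.

Lemma Q_ends_flip (g1 g2 : gL QG) x y : gends g1 = (x, Some y) -> gends g2 = (y, Some x) -> False.
Proof.
case: g1 => [[e1 i1]|[r1|c1]]; case: g2 => [[e2 i2]|[r2|c2]] /= [] <- <- [].
- move=> E1 _ E2 _; have E : e1 = e2 by apply: tedge_uniq; right.
  subst; apply: (adj_neq (tedge_adj e2)); by rewrite E1.
- move=> E1 _ E2 _; apply: (adj_neq (tedge_adj e1)); by rewrite -E1 -E2.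
- move=> E1 _ E2 _; apply: (adj_neq (tedge_adj e1)); by rewrite -E1 -E2.
- move=> E1 _ E2 _; apply: (adj_neq (tedge_adj e2)); by rewrite E1 E2.
- move=> _ E1 _ E2; have E1' : (val r2).2 = s4 (val r1).2 := E1; have E2' : s4 (val r2).2 = (val r1).2 := E2; move: (s4s4_neq (val r1).2); by rewrite -E1' E2' eqxx.
- move=> E _ _; move: (Qring_deg r1); by rewrite -E Qcross_deg.
- move=> E1 _ E2 _; apply: (adj_neq (tedge_adj e2)); by rewrite E1 E2.
- move=> E _ _; move: (Qring_deg r2); by rewrite E Qcross_deg.
- move=> _ E1 _ _; have E1' : c4 (val c2).2 = c4' (val c1).2 := E1; by move: (c4_neq (val c2).2 (val c1).2); rewrite E1' eqxx.
Qed.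

Lemma Q_simple (g1 g2 : gL QG) x y : ends_xy g1 x y -> ends_xy g2 x y -> g1 = g2.
Proof.
case=> E1 [] E2; first (by apply: Q_ends_inj; rewrite E1 E2);
  last (by apply: Q_ends_inj; rewrite E1 E2); exfalso; exact: Q_ends_flip E1 E2.
Qed.


Lemma sum_ge2 (I : finType) (P : pred I) (F : I -> nat) i j :
  i != j -> P i -> P j -> 0 < F i -> 0 < F j -> 2 <= \sum_(k | P k) F k.
Proof.
move=> ij Pi Pj Fi Fj; rewrite (bigD1 i) //= (bigD1 j) /=; last by rewrite Pj eq_sym ij.
rewrite addnA; apply: leq_trans (leq_addr _ _); rewrite -addn1 -add1n; exact: leq_add.
Qed.

Lemma sum_eq1 (I : finType) (P : pred I) (F : I -> nat) i :
  P i -> F i = 1 -> (forall j, P j -> j != i -> F j = 0) -> \sum_(k | P k) F k = 1.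
Proof.
move=> Pi Fi H; rewrite (bigD1 i) //= Fi big1 // => j /andP [Pj ji]; exact: H.
Qed.

Lemma end_deg_xy (g : gL QG) x y : ends_xy g x y -> 0 < end_deg x g.
Proof. by rewrite /end_deg; case=> ->; rewrite eqxx // addn1. Qed.

Lemma deg_pos_link (S : pred (gL QG)) (x : gV QG) : 0 < deg_in S x ->
  exists g y, S g /\ ends_xy g x y.
Proof.
move=> H; case: (boolP [exists g, S g && (0 < end_deg x g)]).
  case/existsP => g /andP [Sg Pg]; case: (Q_some g) => a [b [E _]].
  move: Pg; rewrite /end_deg E.
  case: eqP => [Ea|ax]; first by move=> _; exists g, b; split => //; left; rewrite E Ea.
  case: eqP => [Eb|bx] //; first by move=> _; exists g, a; split => //; right; rewrite E Eb.
move=> /existsPn N; move: H; rewrite /deg_in big1 // => g Sg.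
by move: (N g); rewrite Sg /= lt0n negbK => /eqP.
Qed.

Section Cov.
Variables (fv : gV QG -> gV (T3 adj)) (fl : gL QG -> gL (T3 adj)).
Hypothesis cov : covering fv fl.

Lemma cov_edge_fwd (e : Tedge adj) (g : gL QG) : fl g = inl e ->
  exists a b, gends g = (a, Some b) /\
   ((fv a = (val e).1 /\ fv b = (val e).2) \/ (fv a = (val e).2 /\ fv b = (val e).1)).
Proof.
have := cov (inl e); rewrite /= (adj_neqb (tedge_adj e)); case => H _; exact: H.
Qed.

Lemma cov_edge_deg (e : Tedge adj) (x : gV QG) : fv x = (val e).1 \/ fv x = (val e).2 ->
  deg_in (fun g => fl g == inl e) x = 1.
Proof.
have := cov (inl e); rewrite /= (adj_neqb (tedge_adj e)); case => _ H; exact: H.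
Qed.

Lemma cov_semi_fwd (s : Tsemi adj) (g : gL QG) a b : fl g = inr s ->
  gends g = (a, Some b) -> fv a = (val s).1 /\ fv b = (val s).1.
Proof.
have := cov (inr s); rewrite /=; case => H _ E1 E2.
by move: (H g E1); rewrite E2; case=> _ [].
Qed.

Lemma cov_semi_deg (s : Tsemi adj) (x : gV QG) : fv x = (val s).1 ->
  deg_in (fun g => fl g == inr s) x = 1.
Proof. have := cov (inr s); rewrite /=; case => _ H; exact: H. Qed.

Lemma cov_link (g : gL QG) x y : ends_xy g x y ->
  (fv x = fv y /\ exists s, fl g = inr s /\ fv x = (val s).1) \/
  (exists e, fl g = inl e /\
     ((fv x = (val e).1 /\ fv y = (val e).2) \/ (fv x = (val e).2 /\ fv y = (val e).1))).
Proof.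
move=> Hxy; case E: (fl g) => [e|s].
  right; exists e; split => //; case: (cov_edge_fwd E) => a [b [Eg H]].
  case: Hxy; rewrite Eg => -[] <- <-; first by [].
  by case: H => [] []; [right|left].
left; case: Hxy => Eg.
  by case: (cov_semi_fwd E Eg) => -> ->; split => //; exists s.
by case: (cov_semi_fwd E Eg) => -> ->; split => //; exists s.
Qed.

Lemma cov_adj (g : gL QG) x y : ends_xy g x y -> fv x <> fv y -> adj (fv x) (fv y).
Proof.
move=> H ne; case: (cov_link H) => [[]//|[e [_ [[-> ->]|[-> ->]]]]].
  exact: tedge_adj.
by rewrite adj_sym; exact: tedge_adj.
Qed.

Lemma twin (g1 g2 : gL QG) x y1 y2 : ends_xy g1 x y1 -> ends_xy g2 x y2 ->
  g1 <> g2 -> fv y1 = fv y2 -> fv x <> fv y1 -> False.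
Proof.
move=> H1 H2 ne E nx.
case: (cov_link H1) => [[]//|[e1 [F1 C1]]].
case: (cov_link H2) => [[E2 _]|[e2 [F2 C2]]]; first by apply: nx; rewrite E2.
have ee : e1 = e2.
  apply: tedge_uniq; rewrite -E in C2.
  case: C1 C2 => [[A1 B1]|[A1 B1]] [[A2 B2]|[A2 B2]].
  - by left; rewrite -A1 -B1 -A2 -B2.
  - by right; rewrite -A1 -B1 -A2 -B2.
  - by right; rewrite -A1 -B1 -A2 -B2.
  - by left; rewrite -A1 -B1 -A2 -B2.
subst e2.
have D : fv x = (val e1).1 \/ fv x = (val e1).2 by case: C1 => [[-> _]|[-> _]]; [left|right].
have := cov_edge_deg D; rewrite /deg_in => S.
have : 2 <= \sum_(g | fl g == inl e1) end_deg x g.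
  apply: (@sum_ge2 _ _ _ g1 g2); rewrite ?F1 ?F2 ?eqxx //.
  - by apply/eqP.
  - exact: end_deg_xy H1.
  - exact: end_deg_xy H2.
by rewrite S.
Qed.

Definition rlink (l : VT) (Hl : tdeg adj l == 1) (j : 'I_4) : gL QG :=
  inr (inl (exist _ (l, j) Hl)).

Lemma rlink_ends l (Hl : tdeg adj l == 1) j : ends_xy (rlink Hl j) (l, j) (l, s4 j).
Proof. by left. Qed.

Lemma rlink_inj l (Hl : tdeg adj l == 1) j k : rlink Hl j = rlink Hl k -> j = k.
Proof. by case. Qed.

Lemma ringL l (Hl : tdeg adj l == 1) j :
  fv (l, s4 j) <> fv (l, j) -> fv (l, s4 (s4 (s4 j))) <> fv (l, j) -> False.
Proof.
move=> n1 n3.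
set x0 := (l, j); set x1 := (l, s4 j); set x2 := (l, s4 (s4 j)).
set x3 := (l, s4 (s4 (s4 j))).
have L0 : ends_xy (rlink Hl j) x0 x1 by exact: rlink_ends.
have L1 : ends_xy (rlink Hl (s4 j)) x1 x2 by exact: rlink_ends.
have L2 : ends_xy (rlink Hl (s4 (s4 j))) x2 x3 by exact: rlink_ends.
have L3 : ends_xy (rlink Hl (s4 (s4 (s4 j)))) x0 x3.
  by right; rewrite /= -/(s4 _) s4_4.
have ne : forall k m : 'I_4, (k == m) = false -> rlink Hl k <> rlink Hl m.
  by move=> k m km /rlink_inj E; rewrite E eqxx in km.
have za : adj (fv x0) (fv x1) by apply: (cov_adj L0) => E; apply: n1.
have zb : adj (fv x0) (fv x3) by apply: (cov_adj L3) => E; apply: n3.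
have ab : fv x1 <> fv x3.
  move=> E; apply: (twin L0 L3) => //; last by move=> E'; apply: n1.
  by apply: ne; rewrite eq_sym s4s4s4_neq.
have sym : forall (g : gL QG) u v, ends_xy g u v -> ends_xy g v u.
  by move=> g u v [] E; [right|left].
case: (eqVneq (fv x2) (fv x0)) => [y0|y0].
  apply: (twin (sym _ _ _ L0) L1).
  - by apply: ne; rewrite eq_sym s4_neq.
  - by rewrite y0.
  - by move=> E; apply: n1.
case: (eqVneq (fv x2) (fv x1)) => [ya|ya].
  have : adj (fv x2) (fv x3) by apply: (cov_adj L2); rewrite ya.
  rewrite ya => a3; apply: (no_tri za a3); by rewrite adj_sym.
case: (eqVneq (fv x2) (fv x3)) => [yb|yb].
  have : adj (fv x1) (fv x2) by apply: (cov_adj L1) => E; move/eqP: ya; rewrite E.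
  rewrite yb => a3; apply: (no_tri za a3); by rewrite adj_sym.
have ay : adj (fv x1) (fv x2) by apply: (cov_adj L1) => E; move/eqP: ya; rewrite E.
have yb' : adj (fv x2) (fv x3) by apply: (cov_adj L2) => E; move/eqP: yb; rewrite E.
apply: (no_sq za ay yb'); first by rewrite adj_sym.
  by move=> E; move/eqP: y0; rewrite E.
exact: ab.
Qed.

Lemma end_degE (g : gL QG) a b (x : gV QG) : gends g = (a, Some b) ->
  end_deg x g = (a == x) + (b == x).
Proof. by rewrite /end_deg => ->. Qed.

Lemma sum_ind (I : finType) (P : pred I) (a : I) :
  \sum_(x | P x) ((a == x) : nat) = P a.
Proof.
rewrite big_mkcond (bigD1 a) //= eqxx big1 ?addn0; first by case: (P a).
by move=> x /negPf xa; rewrite eq_sym xa; case: (P x).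
Qed.

Lemma fiber_links (e : Tedge adj) w : w = (val e).1 \/ w = (val e).2 ->
  #|[pred x | fv x == w]| = #|[pred g | fl g == inl e]|.
Proof.
move=> Hw.
rewrite -sum1_card -[RHS]sum1_card.
transitivity (\sum_(x in [pred x | fv x == w]) deg_in (fun g => fl g == inl e) x).
  apply: eq_bigr => x; rewrite inE => /eqP Ex; rewrite cov_edge_deg //.
  by case: Hw => <-; [left|right].
rewrite /deg_in exchange_big /=; apply: eq_big => [g|g /eqP Fg]; first by rewrite inE.
case: (cov_edge_fwd Fg) => a [b [E H]].
rewrite (eq_bigr (fun x => (a == x) + (b == x))); last by move=> x _; exact: end_degE.
rewrite big_split /= !sum_ind /= !inE.
have ne := adj_neq (tedge_adj e).
case: Hw H => -> [[-> ->]|[-> ->]]; rewrite ?eqxx //.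
- have -> : ((val e).2 == (val e).1) = false by apply/eqP => E'; apply: ne.
  by [].
- have -> : ((val e).2 == (val e).1) = false by apply/eqP => E'; apply: ne.
  by [].
- have -> : ((val e).1 == (val e).2) = false by apply/eqP.
  by [].
- have -> : ((val e).1 == (val e).2) = false by apply/eqP.
  by [].
Qed.

Lemma fiber4 : forall u, #|[pred x | fv x == u]| = 4.
Proof.
case: T_maxdeg => _ [c _].
set k := #|[pred x | fv x == c]|.
have Hall : forall z, #|[pred x | fv x == z]| = k.
  apply: (@connect_ind (fun z => #|[pred x | fv x == z]| = k) c) => // z z' Hz Hzz'.
  case: (tedge_exists Hzz') => e [[E1 E2]|[E1 E2]].
  - by rewrite -Hz (fiber_links (or_intror (esym E2))) (fiber_links (or_introl (esym E1))).
  - by rewrite -Hz (fiber_links (or_introl (esym E1))) (fiber_links (or_intror (esym E2))).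
have tot : #|gV QG| = k * #|VT|.
  rewrite -sum1_card (partition_big fv predT) //=.
  rewrite (eq_bigr (fun _ => k)); last first.
    move=> z _; rewrite -(Hall z) -sum1_card; apply: eq_bigl => x.
    by rewrite inE.
  by rewrite sum_nat_const mulnC; congr (_ * _); apply: eq_card => x.
have : #|gV QG| = 4 * #|VT| by rewrite /= card_prod card_ord mulnC.
rewrite tot => /eqP; rewrite eqn_mul2r.
have -> : (#|VT| == 0) = false.
  by apply/negbTE; rewrite -lt0n; apply/card_gt0P; exists c.
by move=> /= /eqP E u; rewrite Hall E.
Qed.

Lemma ends_sym (g : gL QG) u v : ends_xy g u v -> ends_xy g v u.
Proof. by case=> E; [right|left]. Qed.

Lemma ends_neq (g : gL QG) u v : ends_xy g u v -> u <> v.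
Proof.
case: (Q_some g) => a [b [E ne]] [] E'; rewrite E' in E; case: E => -> ->//.
by move=> E; apply: ne.
Qed.

Lemma semi_nbr (s : Tsemi adj) v : fv v = (val s).1 ->
  exists g y, fl g = inr s /\ ends_xy g v y /\ fv y = fv v.
Proof.
move=> Hv; have := cov_semi_deg Hv; move=> H.
case: (@deg_pos_link (fun g => fl g == inr s) v); first by rewrite H.
move=> g [y [/eqP Fg Hg]]; exists g, y; split => //; split => //.
case: (cov_link Hg) => [[-> _]//|[e [Fe _]]].
by rewrite Fg in Fe.
Qed.

Lemma fiber_pig w (a b c d p : gV QG) : #|[pred v | fv v == w]| = 4 ->
  fv a = w -> fv b = w -> fv c = w -> fv d = w -> fv p = w ->
  uniq [:: a; b; c; d] -> p \in [:: a; b; c; d].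
Proof.
move=> H4 Ha Hb Hc Hd Hp U; apply/negPn/negP => Np.
have U5 : uniq [:: p; a; b; c; d] by rewrite cons_uniq Np U.
have : size [:: p; a; b; c; d] <= #|[pred v | fv v == w]|.
  rewrite -(card_uniqP U5); apply: subset_leq_card; apply/subsetP => v.
  by rewrite !inE => /orP [/eqP -> | /orP [/eqP -> | /orP [/eqP -> | /orP [/eqP -> | /eqP ->]]]]; apply/eqP.
by rewrite H4.
Qed.

Lemma main3 (x : gV QG) : tdeg adj x.1 != 1 -> 2 <= tdeg adj (fv x).
Proof.
move=> Hx; rewrite leqNgt; apply/negP => Hw.
set w := fv x.
have H1 : tdeg adj (w, (inord 1 : 'I_3)).1 <= (inord 1 : 'I_3) by rewrite inordK.
have H2 : tdeg adj (w, (inord 2 : 'I_3)).1 <= (inord 2 : 'I_3).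
  by rewrite inordK //; apply: leq_trans (ltnW Hw) _.
set s1 : Tsemi adj := exist (fun p : VT * 'I_3 => tdeg adj p.1 <= p.2) (w, inord 1) H1.
set s2 : Tsemi adj := exist (fun p : VT * 'I_3 => tdeg adj p.1 <= p.2) (w, inord 2) H2.
have s12 : inr s1 <> inr s2 :> gL (T3 adj).
  move=> E; have := congr1 (fun l : gL (T3 adj) => if l is inr s then nat_of_ord (val s).2 else 0) E.
  by rewrite /= !inordK.
have two : forall v, fv v = w -> exists g1 g2 y1 y2, ends_xy g1 v y1 /\ ends_xy g2 v y2 /\ fv y1 = w /\ fv y2 = w /\ y1 <> y2.
  move=> v Hv.
  case: (@semi_nbr s1 v Hv) => g1 [y1 [F1 [E1 W1]]].
  case: (@semi_nbr s2 v Hv) => g2 [y2 [F2 [E2 W2]]].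
  exists g1, g2, y1, y2; do 4! (split; first by rewrite ?W1 ?W2).
  move=> E; subst y2; have := Q_simple E1 E2 => E; apply: s12.
  by rewrite -F1 -F2 E.
have par_nl : forall (g : gL QG) u v, ends_xy g u v -> tdeg adj u.1 != 1 -> odd u.2 = odd v.2.
  move=> g u v H nl; apply/eqP; apply/negP => /negP P.
  by case: (Q_parity H P) => E _; rewrite E in nl.
have fibX : forall t, fv t = w -> odd t.2 = odd x.2.
  move=> t Ht; apply/eqP; apply/negP => /negP Pt.
  case: (two x erefl) => g1 [g2 [y1 [y2 [E1 [E2 [W1 [W2 y12]]]]]]].
  have Py1 := par_nl _ _ _ E1 Hx; have Py2 := par_nl _ _ _ E2 Hx.
  case: (two t Ht) => h1 [h2 [p1 [p2 [F1 [F2 [V1 [V2 p12]]]]]]].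
  have Ux : uniq [:: x; y1; y2; t].
    rewrite /= !inE !negb_or -!andbA.
    have nt : forall v : gV QG, odd x.2 = odd v.2 -> v != t.
      by move=> v Pv; apply/eqP => E; move: Pt; rewrite -E Pv eqxx.
    rewrite (nt x erefl) (nt y1 Py1) (nt y2 Py2) andbT !andbT.
    apply/and3P; split; apply/eqP => //.
    - by apply: (ends_neq E1).
    - by apply: (ends_neq E2).
  have loc : forall (h : gL QG) p, ends_xy h t p -> fv p = w -> p = y1 \/ p = y2.
    move=> h p Hp Vp.
    have : p \in [:: x; y1; y2; t] by apply: (fiber_pig (fiber4 w)).
    rewrite !inE => /or4P [] /eqP Ep.
    - exfalso; have Hp' := ends_sym Hp; rewrite Ep in Hp'.
      by move: (par_nl _ _ _ Hp' Hx) => E; move: Pt; rewrite E eqxx.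
    - by left.
    - by right.
    - by exfalso; apply: (ends_neq Hp).
  have shape : forall (h : gL QG) p, ends_xy h t p -> fv p = w -> p = (t.1, x.2).
    move=> h p Hp Vp.
    have Pp : odd t.2 != odd p.2.
      by case: (loc h p Hp Vp) => ->; rewrite ?Py1 ?Py2 -?Py1 -?Py2.
    case: (Q_parity Hp Pp) => Dt Et.
    have nx : x.1 <> p.1 by move=> E; move: Hx; rewrite E -Et Dt.
    have [g' Hg'] : exists g', ends_xy g' x p.
      by case: (loc h p Hp Vp) => ->; [exists g1 | exists g2].
    have := Q_tree Hg' nx; case: p {Hp Vp Pp Et nx Hg'} (Et) => [pa pb] /= -> ->.
    by [].
  by apply: p12; rewrite (shape _ _ F1 V1) (shape _ _ F2 V2).
have clos : forall z, forall v, fv v = z -> odd v.2 = odd x.2.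
  apply: (@connect_ind (fun z => forall v, fv v = z -> odd v.2 = odd x.2) w); last first.
    by move=> v /fibX.
  move=> z z' Pz Hzz' v' Hv'.
  case: (tedge_exists Hzz') => e He.
  have : fv v' = (val e).1 \/ fv v' = (val e).2.
    by rewrite Hv'; case: He => [[_ ->]|[-> _]]; [right|left].
  move/cov_edge_deg => D.
  case: (@deg_pos_link (fun g => fl g == inl e) v'); first by rewrite D.
  move=> g [v [/eqP Fg Hg]].
  have Hv : fv v = z.
    case: (cov_link Hg) => [[_ [s [Fs _]]]|[e' [Fe' C]]]; first by rewrite Fg in Fs.
    rewrite Fg in Fe'; case: Fe' => ?; subst e'.
    have nzz := adj_neq Hzz'.
    case: He C => [[E1 E2]|[E1 E2]] [[A B]|[A B]].
    - by exfalso; apply: nzz; rewrite -E1 -A Hv'.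
    - by rewrite B.
    - by rewrite B.
    - by exfalso; apply: nzz; rewrite -E2 -A Hv'.
  have Pv := Pz v Hv.
  apply/eqP; apply/negP => /negP Pv'.
  have Pvv' : odd v.2 != odd v'.2 by rewrite Pv eq_sym.
  case: (Q_parity (ends_sym Hg) Pvv') => Dl _.
  move: Pv Pvv' Hv Dl; case: v {Hg} => l j /= Pv _ Hv Dl.
  have Hl : tdeg adj l == 1 by rewrite Dl.
  apply: (ringL Hl (j := j)).
  - move=> E; have := Pz (l, s4 j); rewrite E Hv => /(_ erefl) /=.
    by rewrite s4_odd -Pv; case: (odd j).
  - move=> E; have := Pz (l, s4 (s4 (s4 j))); rewrite E Hv => /(_ erefl) /=.
    by rewrite s4_3_odd -Pv; case: (odd j).
have := clos (fv (x.1, s4 x.2)) (x.1, s4 x.2) erefl.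
by rewrite /= s4_odd; case: (odd x.2).
Qed.

End Cov.

Lemma ring_ok (r : Qring adj) :
  tdeg adj ((val r).1, semi_idx (odd (val r).2)).1 <= semi_idx (odd (val r).2).
Proof. by rewrite /= Qring_deg; case: odd; rewrite /semi_idx inordK. Qed.
Definition ring_semi (r : Qring adj) : Tsemi adj :=
  exist (fun p : VT * 'I_3 => tdeg adj p.1 <= p.2) _ (ring_ok r).
Lemma cross_ok (c : Qcross adj) :
  tdeg adj ((val c).1, (inord 2 : 'I_3)).1 <= (inord 2 : 'I_3).
Proof. by rewrite /= Qcross_deg inordK. Qed.
Definition cross_semi (c : Qcross adj) : Tsemi adj :=
  exist (fun p : VT * 'I_3 => tdeg adj p.1 <= p.2) _ (cross_ok c).

Lemma ring_semi_eq r s : ring_semi r = s ->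
  (val r).1 = (val s).1 /\ semi_idx (odd (val r).2) = (val s).2.
Proof. by move=> <-. Qed.
Lemma cross_semi_eq c s : cross_semi c = s -> (val c).1 = (val s).1.
Proof. by move=> <-. Qed.

Definition flQ (g : gL QG) : gL (T3 adj) :=
  match g with
  | inl (e, _) => inl e
  | inr (inl r) => inr (ring_semi r)
  | inr (inr c) => inr (cross_semi c)
  end.
Definition fvQ (x : gV QG) : gV (T3 adj) := x.1.

Lemma covQ : covering fvQ flQ.
Proof.
case=> [e|s] /=.
- rewrite (adj_neqb (tedge_adj e)); split.
  + move=> [[e' i]|[r|c]] //= E; case: E => ->.
    by exists ((val e).1, i), ((val e).2, i); split => //; left.
  + case=> a k /= Hx; rewrite /deg_in.
    apply: (@sum_eq1 _ _ _ (inl (e, k))); first by rewrite /= eqxx.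
      rewrite /end_deg /= !xpair_eqE eqxx !andbT.
      have ne : ((val e).1 == (val e).2) = false := adj_neqb (tedge_adj e).
      case: Hx => ->; rewrite ?eqxx ?ne // eq_sym ne //.
    move=> [[e' i]|[r|c]] //= /eqP [->] ne.
    rewrite /end_deg /= !xpair_eqE.
    have -> : (i == k) = false.
      by apply/negbTE; apply: contra ne => /eqP ->.
    by rewrite !andbF.
- split.
  + move=> [[e i]|[r|c]] //= [] <- /=.
    * split; last by [].
      by case=> E; move/eqP: E; rewrite eq_sym -/(s4 _) s4_neq.
    * split; last by [].
      by case=> E; move/eqP: E; rewrite -/(c4 _) -/(c4' _) c4_neq.
  + case=> a k /= Ha; rewrite /deg_in.
    have Hs := valP s; rewrite /= -Ha in Hs.
    have := tdeg_pos a; have := ltn_ord (val s).2.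
    case Ht : (tdeg adj a) Hs => [|[|[|t]]] Hs //=.
    { move=> _ _.
      have Hr : tdeg adj (a, pick0 k ((val s).2 == 2 :> nat)).1 == 1 by rewrite /= Ht.
      set j0 := pick0 k ((val s).2 == 2 :> nat).
      set r0 : Qring adj := exist _ (a, j0) Hr.
      have sidx : semi_idx (odd j0) = (val s).2 by rewrite pick0_odd semi_idxE.
      apply: (@sum_eq1 _ _ _ (inr (inl r0))).
      * rewrite /=; apply/eqP; congr inr; apply: val_inj => /=.
        rewrite sidx Ha; exact: (esym (surjective_pairing _)).
      * rewrite /end_deg /= !xpair_eqE eqxx /= -/(s4 _).
        case/orP: (pick0_in k ((val s).2 == 2 :> nat)) => /eqP E; rewrite -/j0 in E.
        - by rewrite -E eqxx s4_neq.
        - by rewrite -E eqxx eq_sym s4_neq.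
      * move=> [[e i]|[r|c]] //=; last first.
          move=> /eqP [] /cross_semi_eq E1 _; exfalso; move: (Qcross_deg c); by rewrite E1 -Ha Ht.
        move=> /eqP [] /ring_semi_eq [E1 E2] ne; rewrite /end_deg /= !xpair_eqE E1 -Ha eqxx /= -/(s4 _).
        case H : (((val r).2 == k) || (s4 (val r).2 == k)); last first.
          by move/norP: H => [/negbTE -> /negbTE ->].
        have : r = r0.
          apply: val_inj => /=.
          rewrite -sidx in E2; move/semi_idx_inj: E2 => E2.
          have U := @pick0_uniq k ((val s).2 == 2 :> nat) (val r).2.
          have E3 : (val r).2 = j0 by apply: U => //; rewrite E2 pick0_odd.
          transitivity ((val r).1, (val r).2); first exact: surjective_pairing.
          by rewrite E1 E3 -Ha.
        by move=> E; rewrite E eqxx in ne.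
    }
    { move=> _ _.
      have Hc : tdeg adj (a, cpick k).1 == 2 by rewrite /= Ht.
      set c0 : Qcross adj := exist _ (a, cpick k) Hc.
      have s2 : (val s).2 = inord 2.
        apply: val_inj; rewrite /= inordK //; apply/eqP; rewrite eqn_leq Hs.
        by rewrite -ltnS ltn_ord.
      apply: (@sum_eq1 _ _ _ (inr (inr c0))).
      * rewrite /=; apply/eqP; congr inr; apply: val_inj => /=.
        by rewrite Ha -s2; exact: (esym (surjective_pairing _)).
      * rewrite /end_deg /= !xpair_eqE eqxx /=.
        change ((c4 (cpick k) == k) + (c4' (cpick k) == k) = 1).
        have := cpick_in k; set c := cpick k; case/orP => /eqP E; rewrite -E eqxx.
        - by rewrite eq_sym c4_neq.
        - by rewrite c4_neq.
      * move=> [[e i]|[r|c]] //=.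
          move=> /eqP [] /ring_semi_eq [E1 _] _; exfalso; move: (Qring_deg r); by rewrite E1 -Ha Ht.
        move=> /eqP [] /cross_semi_eq E1 ne; rewrite /end_deg /= !xpair_eqE E1 -Ha eqxx /=.
        change ((c4 (val c).2 == k) + (c4' (val c).2 == k) = 0).
        case H : ((c4 (val c).2 == k) || (c4' (val c).2 == k)); last first.
          by move/norP: H => [/negbTE -> /negbTE ->].
        have : c = c0.
          apply: val_inj => /=.
          have E3 : (val c).2 = cpick k by apply: cpick_uniq.
          transitivity ((val c).1, (val c).2); first exact: surjective_pairing.
          by rewrite E1 E3 -Ha.
        by move=> E; rewrite E eqxx in ne.
    }
    by move=> H3 _; move: (leq_ltn_trans Hs H3).
Qed.

Lemma semi_simple_of (v : VT) : 2 <= tdeg adj v -> @semi_simple (T3 adj) v.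
Proof.
move=> Hv; split; [|split].
- move=> [e|s] //= [] E1 E2; apply: (adj_neq (tedge_adj e)); by rewrite E1 E2.
- move=> [e1|s1] [e2|s2] a1 b1 a2 b2 ne //= [] E1 E2 [] E3 E4 _ _ H.
  apply: ne; congr inl; apply: tedge_uniq.
  by rewrite E1 E2 E3 E4.
- apply/card_le1_eqP => g g'; rewrite !inE.
  case: g g' => [e|s] [e'|s'] /= /eqP [] E // /eqP [] E' //.
  have F : forall t : Tsemi adj, (val t).1 = v -> nat_of_ord (val t).2 = 2.
    move=> t Et; have := valP t; rewrite /= Et => Ht.
    apply/eqP; rewrite eqn_leq (leq_trans Hv Ht) andbT -ltnS; exact: ltn_ord.
  have -> // : s' = s; apply: val_inj.
  transitivity ((val s').1, (val s').2); first exact: surjective_pairing.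
  transitivity ((val s).1, (val s).2); last exact: (esym (surjective_pairing _)).
  have -> : (val s').2 = (val s).2 by apply: val_inj; rewrite /= (F _ E) (F _ E').
  by rewrite E E'.
Qed.

End L18.

Unset Implicit Arguments.

Theorem lemma18 (VT : finType) (adj : rel VT)
  (adj_sym : symmetric adj) (adj_irr : irreflexive adj)
  (T_tree : is_tree adj) (T_maxdeg : max_degree3 adj) :
  covers (Q4 adj) (T3 adj) /\
  (forall (fv : gV (Q4 adj) -> gV (T3 adj)) (fl : gL (Q4 adj) -> gL (T3 adj)),
     covering fv fl ->
     (forall u : gV (T3 adj), #|[pred x | fv x == u]| = 4) /\
     (forall x : gV (Q4 adj), relevant adj x.1 -> semi_simple (fv x))).
Proof.
split.
  exists (@fvQ VT adj), (@flQ VT adj); apply: covQ => //.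

move=> fv fl cov; split.
  exact: fiber4 cov.
move=> x Hrel; apply: semi_simple_of => //.
apply: (main3 adj_sym adj_irr T_tree T_maxdeg cov).
by move: Hrel; rewrite /relevant; case/orP => [/eqP ->|/andP [/eqP -> _]].
Qed.
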